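(* Let $(E,\mathscr{T},\le)$ be a locally compact $T_2$-preordered Tychonoff space with $G(\le)=\bigcap_{f\in\mathcal{F}}G_f$. Then every Hausdorff $T_2$-preorder compactification $c:E\to cE$ of $E$ dominates the $\mathcal{H}$-compactification, where $\mathcal{H}\subseteq\mathcal{F}$ is the family of those $f\in\mathcal{F}$ such that $f\circ c^{-1}:c(E)\to[0,1]$ extends to a continuous isotone function $cE\to[0,1]$; moreover this $\mathcal{H}$ satisfies $G(\le)=\bigcap_{h\in\mathcal{H}}G_h$.
   Context: $T_2$-preordered: the graph $G(\le)=\{(x,y):x\le y\}$ is closed in $E\times E$. $\mathcal{F}$ is the family of continuous isotone ($x\le y\Rightarrow f(x)\le f(y)$) functions $f:E\to[0,1]$; $G_f=\{(x,y):f(x)\le f(y)\}$. A preorder compactification is a preorder embedding (continuous isotone injective map, homeomorphism onto image, isotone inverse for the induced preorder) $c:E\to cE$ with dense image into a compact topological preordered space; it is a Hausdorff $T_2$-preorder compactification if $cE$ is Hausdorff and $\le_c$ has closed graph. $c_1\le c_2$ ($c_2$ dominates $c_1$) means there is a continuous isotone $C:c_2E\to c_1E$ with $C\circ c_2=c_1$. $\mathcal{C}$ is the family of continuous functions $E\to[0,1]$ constant outside a compact set. For $\mathcal{H}\subseteq\mathcal{F}$ with $G(\le)=\bigcap_{h\in\mathcal{H}}G_h$, the $\mathcal{H}$-compactification is $c:E\to[0,1]^{\mathcal{H}\cup\mathcal{C}}$, $c(x)=(g(x))_{g\in\mathcal{H}\cup\mathcal{C}}$, with $cE$ the closure of $c(E)$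 with the product (induced) topology and preorder $x\le_c y$ iff $x_h\le y_h$ for all $h\in\mathcal{H}$. *)

(* Defs.v *)
From HB Require Import structures.
From mathcomp Require Import all_boot all_order all_algebra.
From mathcomp Require Import all_classical all_reals all_analysis.
Set Implicit Arguments. Unset Strict Implicit. Unset Printing Implicit Defensive.
Import Order.TTheory GRing.Theory Num.Theory.
Import numFieldNormedType.Exports.
Local Open Scope classical_set_scope.
Local Open Scope ring_scope.

Definition preorder_rel {T : Type} (le : T -> T -> Prop) : Prop :=
  (forall x, le x x) /\ (forall x y z, le x y -> le y z -> le x z).

Definition graph_of {T : Type} (le : T -> T -> Prop) : set (T * T) :=
  [set p | le p.1 p.2].

Definition T2_preordered {T : topologicalType} (le : T -> T -> Prop) : Prop :=
  preorder_rel le /\ closed (graph_of le).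

Definition isotone {T U : Type} (leT : T -> T -> Prop) (leU : U -> U -> Prop)
  (f : T -> U) : Prop := forall x y, leT x y -> leU (f x) (f y).

Definition tychonoff_space (R : realType) (T : topologicalType) : Prop :=
  hausdorff_space T /\
  forall (x : T) (B : set T), closed B -> ~ B x ->
    exists f : T -> R, continuous f /\ (forall y, 0 <= f y <= 1) /\
      f x = 0 /\ (forall y, B y -> f y = 1).

Definition Ffam (R : realType) (E : topologicalType) (le : E -> E -> Prop)
  (f : E -> R) : Prop :=
  continuous f /\ isotone le (fun a b : R => a <= b) f /\ (forall x, 0 <= f x <= 1).

Definition Gf (R : realType) {T : Type} (f : T -> R) : set (T * T) :=
  [set p | f p.1 <= f p.2].

Definition Cfam (R : realType) (E : topologicalType) (g : E -> R) : Prop :=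
  continuous g /\ (forall x, 0 <= g x <= 1) /\
  exists K : set E, compact K /\ exists a : R, forall x, ~ K x -> g x = a.

(** Preorder embedding: continuous, isotone, injective, homeomorphism onto its
    image (open sets of E are traces of open sets of X on c(E)), and with
    isotone inverse for the induced preorder. *)
Definition preorder_embedding (E X : topologicalType)
  (le : E -> E -> Prop) (lec : X -> X -> Prop) (c : E -> X) : Prop :=
  continuous c /\ isotone le lec c /\ injective c /\
  (forall U : set E, open U -> exists V : set X, open V /\ c @` U = V `&` range c) /\
  (forall x y, lec (c x) (c y) -> le x y).

Definition preorder_compactification (E X : topologicalType)
  (le : E -> E -> Prop) (lec : X -> X -> Prop) (c : E -> X) : Prop :=
  compact [set: X] /\ preorder_rel lec /\ preorder_embedding le lec c /\
  dense (range c).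

Definition hausdorff_T2_preorder_compactification (E X : topologicalType)
  (le : E -> E -> Prop) (lec : X -> X -> Prop) (c : E -> X) : Prop :=
  preorder_compactification le lec c /\ hausdorff_space X /\ closed (graph_of lec).

Definition Hfam (R : realType) (E X : topologicalType)
  (le : E -> E -> Prop) (lec : X -> X -> Prop) (c : E -> X) (f : E -> R) : Prop :=
  Ffam le f /\
  exists F : X -> R, continuous F /\ (forall z, 0 <= F z <= 1) /\
    isotone lec (fun a b : R => a <= b) F /\ (forall x, F (c x) = f x).

(** The H-compactification, for a family Hf of functions E -> R:
    index set H u C, embedding into the product [0,1]^(H u C) (taken inside
    R^(H u C) with the product topology), closure of the image, and the
    preorder u <= v iff u_h <= v_h for all h in H. *)
Definition HCindex (R : realType) (E : topologicalType) (Hf : (E -> R) -> Prop) :=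
  {g : E -> R | Hf g \/ Cfam g}.

Definition HCmap (R : realType) (E : topologicalType) (Hf : (E -> R) -> Prop)
  (x : E) : {ptws (HCindex Hf) -> R} := fun i => sval i x.

Definition HCspace (R : realType) (E : topologicalType) (Hf : (E -> R) -> Prop)
  : set {ptws (HCindex Hf) -> R} := closure (range (@HCmap R E Hf)).

Definition HCle (R : realType) (E : topologicalType) (Hf : (E -> R) -> Prop)
  (u v : {ptws (HCindex Hf) -> R}) : Prop :=
  forall i : HCindex Hf, Hf (sval i) -> u i <= v i.

(** c2 : E -> X dominates the H-compactification: there is a continuous
    isotone C : X -> cE (cE = closure of the image, subspace of the product)
    with C o c2 = c_H. *)
Definition dominates_HC (R : realType) (E X : topologicalType)
  (lec : X -> X -> Prop) (c : E -> X) (Hf : (E -> R) -> Prop) : Prop :=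
  exists C : X -> {ptws (HCindex Hf) -> R},
    continuous C /\ (forall z, @HCspace R E Hf (C z)) /\
    isotone lec (@HCle R E Hf) C /\ (forall x, C (c x) = @HCmap R E Hf x).

(* Main.v *)
Require Import Defs.
From HB Require Import structures.
From mathcomp Require Import all_boot all_order all_algebra.
From mathcomp Require Import all_classical all_reals all_analysis.
From mathcomp Require Import zify.
Import Order.TTheory GRing.Theory Num.Theory.
Import numFieldNormedType.Exports.
Local Open Scope classical_set_scope.
Local Open Scope ring_scope.

Definition upset {X : Type} (lec : X -> X -> Prop) (A : set X) : set X :=
  [set z | exists2 y, A y & lec y z].
Definition downset {X : Type} (lec : X -> X -> Prop) (A : set X) : set X :=
  [set z | exists2 y, A y & lec z y].
Definition is_lower {X : Type} (lec : X -> X -> Prop) (A : set X) : Prop :=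
  forall x y, lec x y -> A y -> A x.

Lemma compactTT (X : topologicalType) : compact [set: X] ->
  compact [set: X * X].
Proof.
move=> cX; have := compact_setX cX cX.
by rewrite setXTT.
Qed.

Lemma upset_closed (X : topologicalType) (lec : X -> X -> Prop) (A : set X) :
  compact [set: X] -> hausdorff_space X -> closed (graph_of lec) ->
  closed A -> closed (upset lec A).
Proof.
move=> cX hX gc cA.
have -> : upset lec A = snd @` ((fst @^-1` A) `&` graph_of lec).
  apply/seteqP; split => z.
    by move=> [y Ay yz]; exists (y, z).
  by move=> [[y z'] [/= Ay yz] <-]; exists y.
apply: compact_closed => //.
apply: continuous_compact; first by apply: continuous_subspaceT => p; exact: cvg_snd.
rewrite -[_ `&` _]setTI; apply: compact_closedI; first exact: compactTT.
apply: closedI => //; apply: preimage_closed => //.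
by move=> p _; exact: cvg_fst.
Qed.

Lemma downset_closed (X : topologicalType) (lec : X -> X -> Prop) (A : set X) :
  compact [set: X] -> hausdorff_space X -> closed (graph_of lec) ->
  closed A -> closed (downset lec A).
Proof.
move=> cX hX gc cA.
have -> : downset lec A = fst @` ((snd @^-1` A) `&` graph_of lec).
  apply/seteqP; split => z.
    by move=> [y Ay yz]; exists (z, y).
  by move=> [[z' y] [/= Ay yz] <-]; exists y.
apply: compact_closed => //.
apply: continuous_compact; first by apply: continuous_subspaceT => p; exact: cvg_fst.
rewrite -[_ `&` _]setTI; apply: compact_closedI; first exact: compactTT.
apply: closedI => //; apply: preimage_closed => //.
by move=> p _; exact: cvg_snd.
Qed.
Lemma interp_exists (R : realType) (X : topologicalType) (lec : X -> X -> Prop)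
  (S V : set X) :
  compact [set: X] -> hausdorff_space X -> preorder_rel lec ->
  closed (graph_of lec) -> open V -> is_lower lec V -> closure S `<=` V ->
  exists W, [/\ open W, is_lower lec W, closure S `<=` W & closure W `<=` V].
Proof.
move=> cX hX [lrefl ltrans] gc oV lV SV.
have nX := compact_normal hX cX.
have /(normal_openP (R:=R)) := nX.
move=> H.
have h1 : closed (downset lec (closure S)) by exact: (@downset_closed _ lec _ cX hX gc (@closed_closure _ S)).
have h2 : closed (~` V) by rewrite closedC.
have h3 : downset lec (closure S) `&` ~` V = set0.
  apply/seteqP; split => // z [[y Sy zy] nVz]; apply: nVz.
  exact: (lV _ _ zy (SV _ Sy)).
have [OK [OL [oOK oOL KOK LOL OKL]]] := H _ _ h1 h2 h3.
exists (~` upset lec (~` OK)); split.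
- by rewrite openC; apply: upset_closed => //; rewrite closedC.
- move=> x y xy Wy [u nu ux]; apply: Wy; exists u => //; exact: ltrans ux xy.
- move=> s Ss [u nu us]; apply: nu; apply: KOK; exists s => //.
- have WOK : ~` upset lec (~` OK) `<=` OK.
    by move=> x Wx; apply/not_notP => nx; apply: Wx; exists x.
  have cl : closed (~` OL) by rewrite closedC.
  move=> z /(closureS WOK) zc.
  have : closure (~` OL) z.
    apply: (closureS _ zc) => x OKx OLx.
    by have : (OK `&` OL) x by []; rewrite OKL.
  rewrite -(closure_id _).1 // => nOL; apply/not_notP => nVz.
  exact: nOL (LOL _ nVz).
Qed.
Definition interpW {X : topologicalType} (lec : X -> X -> Prop) (S V : set X) : set X :=
  match pselect (exists W, [/\ open W, is_lower lec W, closure S `<=` W & closure W `<=` V]) with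
  | left h => projT1 (cid h)
  | right _ => V
  end.

Lemma interpW_spec {X : topologicalType} (lec : X -> X -> Prop) (S V : set X) :
  (exists W, [/\ open W, is_lower lec W, closure S `<=` W & closure W `<=` V]) ->
  [/\ open (interpW lec S V), is_lower lec (interpW lec S V),
      closure S `<=` interpW lec S V & closure (interpW lec S V) `<=` V].
Proof.
rewrite /interpW; case: pselect => // h _.
by case: (cid h).
Qed.

Fixpoint lev {X : topologicalType} (lec : X -> X -> Prop) (W0 V0 : set X)
  (n : nat) (k : nat) : set X :=
  match n with
  | 0 => if k == 0%N then W0 else V0
  | n'.+1 => if ((k %% 2 == 1)%N && (k < 2 ^ n'.+1)%N)
             then interpW lec (lev lec W0 V0 n' (k %/ 2)) (lev lec W0 V0 n' (k %/ 2).+1)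
             else lev lec W0 V0 n' (k %/ 2)
  end.

Lemma lev_inv (R : realType) (X : topologicalType) (lec : X -> X -> Prop) (W0 V0 : set X) :
  compact [set: X] -> hausdorff_space X -> preorder_rel lec ->
  closed (graph_of lec) ->
  open W0 -> is_lower lec W0 -> open V0 -> is_lower lec V0 ->
  closure W0 `<=` V0 -> forall n,
  [/\ (forall k, open (lev lec W0 V0 n k) /\ is_lower lec (lev lec W0 V0 n k)),
      (forall k, (k < 2 ^ n)%N -> closure (lev lec W0 V0 n k) `<=` lev lec W0 V0 n k.+1)
    & (forall k, (2 ^ n <= k)%N -> lev lec W0 V0 n k = V0)].
Proof.
move=> cX hX pl gc oW lW oV lV WV.
elim => [|n [IH1 IH2 IH3]].
  split.
  - by move=> k /=; case: ifP.
  - by move=> k; rewrite expn0 ltnS leqn0 => /eqP -> /=.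
  - by move=> k; rewrite expn0 /= => k1; case: ifP => // /eqP k0; rewrite k0 in k1.
have ex : forall k, (k < 2 ^ n)%N ->
  exists W, [/\ open W, is_lower lec W, closure (lev lec W0 V0 n k) `<=` W
    & closure W `<=` lev lec W0 V0 n k.+1].
  move=> k kn; apply: (interp_exists R) => //.
  - by case: (IH1 k.+1).
  - by case: (IH1 k.+1).
  - exact: IH2.
have ar1 : forall k, (k < 2 ^ n.+1)%N -> (k %/ 2 < 2 ^ n)%N.
  by move=> k; rewrite expnS; lia.
split.
- move=> k /=; case: ifP => [/andP [k1 kn]|_]; last exact: IH1.
  by have [] := @interpW_spec _ lec _ _ (ex (k %/ 2)%N (ar1 _ kn)).
- move=> k kn /=.
  case: (boolP ((k %% 2 == 1)%N)) => k2 /=.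
  + have -> /= : (k < 2 ^ n.+1)%N = true by [].
    have [_ _ _ h] := @interpW_spec _ lec _ _ (ex (k %/ 2)%N (ar1 _ kn)).
    have -> : (k.+1 %% 2 == 1)%N = false by lia.
    by have -> : (k.+1 %/ 2 = (k %/ 2).+1)%N by lia.
  + have kn' : (k.+1 < 2 ^ n.+1)%N.
      by move: kn; rewrite expnS => kn; lia.
    have -> /= : (k.+1 %% 2 == 1)%N = true by lia.
    rewrite kn' /=.
    have -> : (k.+1 %/ 2 = k %/ 2)%N by lia.
    by have [_ _ h _] := @interpW_spec _ lec _ _ (ex (k %/ 2)%N (ar1 _ kn)).
- move=> k kn /=.
  have -> /= : (k < 2 ^ n.+1)%N = false by apply/negbTE; rewrite -leqNgt.
  rewrite andbF; apply: IH3.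
  by move: kn; rewrite expnS => kn; lia.
Qed.
Definition lev_good {X : topologicalType} (lec : X -> X -> Prop) (W0 V0 : set X) :=
  forall n,
  [/\ (forall k, open (lev lec W0 V0 n k) /\ is_lower lec (lev lec W0 V0 n k)),
      (forall k, (k < 2 ^ n)%N -> closure (lev lec W0 V0 n k) `<=` lev lec W0 V0 n k.+1)
    & (forall k, (2 ^ n <= k)%N -> lev lec W0 V0 n k = V0)].

Lemma lev_double {X : topologicalType} (lec : X -> X -> Prop) (W0 V0 : set X) n k :
  lev lec W0 V0 n.+1 (k * 2) = lev lec W0 V0 n k.
Proof.
rewrite /=.
have -> : ((k * 2) %% 2 == 1)%N = false by lia.
by have -> : ((k * 2) %/ 2 = k)%N by lia.
Qed.

Lemma lev_lift {X : topologicalType} (lec : X -> X -> Prop) (W0 V0 : set X) n m k :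
  lev lec W0 V0 (n + m) (k * 2 ^ m) = lev lec W0 V0 n k.
Proof.
elim: m => [|m IH]; first by rewrite addn0 expn0 muln1.
by rewrite addnS expnS mulnCA -[(_ * (k * _))%N]mulnC lev_double.
Qed.

Lemma lev_mono1 {X : topologicalType} (lec : X -> X -> Prop) (W0 V0 : set X) n k :
  lev_good lec W0 V0 -> lev lec W0 V0 n k `<=` lev lec W0 V0 n k.+1.
Proof.
move=> g; have [_ h2 h3] := g n.
case: (ltnP k (2 ^ n)) => kn.
  by apply: subset_trans (h2 _ kn); exact: subset_closure.
by rewrite !h3 // ltnW.
Qed.

Lemma lev_mono {X : topologicalType} (lec : X -> X -> Prop) (W0 V0 : set X) n k k' :
  lev_good lec W0 V0 -> (k <= k')%N -> lev lec W0 V0 n k `<=` lev lec W0 V0 n k'.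
Proof.
move=> g; elim: k' => [|k' IH]; first by rewrite leqn0 => /eqP ->.
rewrite leq_eqVlt => /orP [/eqP -> //|].
rewrite ltnS => /IH h; apply: subset_trans h _; exact: lev_mono1.
Qed.

Lemma lev_cross {X : topologicalType} (lec : X -> X -> Prop) (W0 V0 : set X) m j n k :
  lev_good lec W0 V0 -> (j * 2 ^ n <= k * 2 ^ m)%N ->
  lev lec W0 V0 m j `<=` lev lec W0 V0 n k.
Proof.
move=> g h.
rewrite -(lev_lift lec W0 V0 m n j) -(lev_lift lec W0 V0 n m k) (addnC n m).
exact: (lev_mono _ _ _ _ _ _ g h).
Qed.

Lemma lev_subV {X : topologicalType} (lec : X -> X -> Prop) (W0 V0 : set X) n k :
  lev_good lec W0 V0 -> lev lec W0 V0 n k `<=` V0.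
Proof.
move=> g; have [_ _ h3] := g n.
have := lev_mono lec W0 V0 n k (maxn k (2 ^ n)) g (leq_maxl k (2 ^ n)).
have e : (2 ^ n <= maxn k (2 ^ n))%N by rewrite leq_max leqnn orbT.
by rewrite (h3 _ e).
Qed.

Lemma lev_0 {X : topologicalType} (lec : X -> X -> Prop) (W0 V0 : set X) n :
  lev lec W0 V0 n 0 = W0.
Proof.
by have := lev_lift lec W0 V0 0 n 0; rewrite mul0n add0n => ->.
Qed.
Definition levD (R : realType) {X : topologicalType} (lec : X -> X -> Prop) (W0 V0 : set X)
  (x : X) : set R :=
  [set r | exists n k, lev lec W0 V0 n k x /\ r = k%:R / (2 ^ n)%:R] `|` [set 1].

Definition levF (R : realType) {X : topologicalType} (lec : X -> X -> Prop) (W0 V0 : set X)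
  (x : X) : R := inf (levD R lec W0 V0 x).

Lemma levD_ge0 (R : realType) {X : topologicalType} (lec : X -> X -> Prop) (W0 V0 : set X) x :
  lbound (levD R lec W0 V0 x) 0.
Proof.
move=> r [[n [k [_ ->]]]|->] //.
Qed.

Lemma levD_n0 (R : realType) {X : topologicalType} (lec : X -> X -> Prop) (W0 V0 : set X) x :
  levD R lec W0 V0 x !=set0.
Proof. by exists 1; right. Qed.

Lemma levF_le (R : realType) {X : topologicalType} (lec : X -> X -> Prop) (W0 V0 : set X) x r :
  levD R lec W0 V0 x r -> levF R lec W0 V0 x <= r.
Proof.
move=> Dr; apply: ge_inf => //; exists 0; exact: levD_ge0.
Qed.

Lemma levF_01 (R : realType) {X : topologicalType} (lec : X -> X -> Prop) (W0 V0 : set X) x :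
  0 <= levF R lec W0 V0 x <= 1.
Proof.
apply/andP; split; last by apply: levF_le; right.
apply: lb_le_inf; [exact: levD_n0 | exact: levD_ge0].
Qed.

Lemma levF_ub (R : realType) {X : topologicalType} (lec : X -> X -> Prop) (W0 V0 : set X) x n k :
  lev lec W0 V0 n k x -> levF R lec W0 V0 x <= k%:R / (2 ^ n)%:R.
Proof. by move=> h; apply: levF_le; left; exists n, k. Qed.

Lemma pow2_gt0 (R : realType) n : 0 < (2 ^ n)%:R :> R.
Proof. by rewrite ltr0n expn_gt0. Qed.

Lemma levF_lb (R : realType) {X : topologicalType} (lec : X -> X -> Prop) (W0 V0 : set X) x n k :
  lev_good lec W0 V0 -> (k <= 2 ^ n)%N -> ~ lev lec W0 V0 n k x ->
  k%:R / (2 ^ n)%:R <= levF R lec W0 V0 x.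
Proof.
move=> g kn nx; apply: lb_le_inf; first exact: levD_n0.
move=> r [[m [j [xj ->]]]|->].
  have h : (k * 2 ^ m <= j * 2 ^ n)%N.
    rewrite leqNgt; apply/negP => lt; apply: nx.
    by apply: (lev_cross _ _ _ _ _ _ _ g (ltnW lt)).
  rewrite ler_pdivrMr ?pow2_gt0 // mulrAC ler_pdivlMr ?pow2_gt0 //.
  by rewrite -!natrM ler_nat.
by rewrite ler_pdivrMr ?pow2_gt0 // mul1r ler_nat.
Qed.

Lemma levF_iso (R : realType) {X : topologicalType} (lec : X -> X -> Prop) (W0 V0 : set X) x y :
  lev_good lec W0 V0 -> lec x y -> levF R lec W0 V0 x <= levF R lec W0 V0 y.
Proof.
move=> g xy; apply: lb_le_inf; first exact: levD_n0.
move=> r [[n [k [yk ->]]]|->].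
  apply: levF_ub; have [h1 _ _] := g n; have [_ lo] := h1 k.
  exact: lo xy yk.
by apply: levF_le; right.
Qed.
Lemma levF_usc (R : realType) {X : topologicalType} (lec : X -> X -> Prop) (W0 V0 : set X) x t :
  lev_good lec W0 V0 -> levF R lec W0 V0 x < t ->
  \forall y \near x, levF R lec W0 V0 y < t.
Proof.
move=> g /(inf_lt (levD_n0 R lec W0 V0 x)) [r [[n [k [xk ->]]]|->]] rt.
  have [h1 _ _] := g n; have [opk _] := h1 k.
  apply: (@filterS _ _ _ (lev lec W0 V0 n k)).
    by move=> y yk; apply: le_lt_trans rt; exact: levF_ub.
  exact: open_nbhs_nbhs.
apply: nearW => y; apply: le_lt_trans rt.
by have /andP [] := levF_01 R lec W0 V0 y.
Qed.

Lemma levF_lsc (R : realType) {X : topologicalType} (lec : X -> X -> Prop) (W0 V0 : set X) x t :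
  lev_good lec W0 V0 -> t < levF R lec W0 V0 x ->
  \forall y \near x, t < levF R lec W0 V0 y.
Proof.
move=> g tF.
have [t0|t0] := ltP t 0.
  apply: nearW => y; apply: lt_le_trans t0 _.
  by have /andP [] := levF_01 R lec W0 V0 y.
set d := levF R lec W0 V0 x - t.
have d0 : 0 < d by rewrite subr_gt0.
pose n := (Num.trunc (2 / d)).+1.
have hn : 2 / d < n%:R.
  have /andP [_ h] := truncn_itv (divr_ge0 (ler0n R 2) (ltW d0)).
  exact: h.
have n2 : (n < 2 ^ n)%N by apply: ltn_expl.
set N := (2 ^ n)%:R : R.
have N0 : 0 < N by exact: pow2_gt0.
have hN : 2 / N < d.
  rewrite ltr_pdivrMr // mulrC -ltr_pdivrMr //.
  apply: lt_trans hn _; rewrite ltr_nat //.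
pose k := (Num.trunc (t * N)).+1.
have hk : t * N < k%:R /\ k%:R <= t * N + 1.
  have /andP [h1 h2] := truncn_itv (mulr_ge0 t0 (ltW N0)).
  split => //; rewrite /k -natr1 lerD2r //.
have tk : t < k%:R / N by rewrite ltr_pdivlMr //; case: hk.
have k1F : k.+1%:R / N < levF R lec W0 V0 x.
  have -> : levF R lec W0 V0 x = t + d by rewrite /d addrC subrK.
  apply: le_lt_trans (_ : t + 2 / N < _); last by rewrite ltrD2l.
  rewrite ler_pdivrMr // mulrDl divfK ?gt_eqF // -natr1.
  case: hk => _ h.
  have -> : t * N + 2 = (t * N + 1) + 1 by rewrite -addrA.
  by rewrite lerD2r.
have kn : (k < 2 ^ n)%N.
  have /andP [_ F1] := levF_01 R lec W0 V0 x.
  have : k.+1%:R / N < 1 by exact: lt_le_trans k1F F1.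
  by rewrite ltr_pdivrMr // mul1r ltr_nat; exact: ltnW.
have nxk1 : ~ lev lec W0 V0 n k.+1 x.
  by move=> h; have := @levF_ub R X lec W0 V0 x n k.+1 h; rewrite leNgt k1F.
have [h1 h2 _] := g n.
have ncl : ~ closure (lev lec W0 V0 n k) x by move=> /(h2 _ kn).
apply: (@filterS _ _ _ (~` closure (lev lec W0 V0 n k))).
  move=> y ny; apply: lt_le_trans tk _; apply: levF_lb => //; first exact: ltnW.
  by move=> yk; apply: ny; exact: subset_closure.
apply: open_nbhs_nbhs; split => //; rewrite openC; exact: closed_closure.
Qed.

Lemma levF_cont (R : realType) {X : topologicalType} (lec : X -> X -> Prop) (W0 V0 : set X) :
  lev_good lec W0 V0 -> continuous (levF R lec W0 V0).
Proof.
move=> g x; apply/cvgrPdist_lt => e e0.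
have h1 := @levF_usc R X lec W0 V0 x (levF R lec W0 V0 x + e) g.
have h2 := @levF_lsc R X lec W0 V0 x (levF R lec W0 V0 x - e) g.
have u1 : levF R lec W0 V0 x < levF R lec W0 V0 x + e by rewrite ltrDl.
have u2 : levF R lec W0 V0 x - e < levF R lec W0 V0 x by rewrite ltrBlDr ltrDl.
near=> y.
rewrite ltr_distlC; apply/andP; split.
  near: y; exact: h2 u2.
near: y; exact: h1 u1.
Unshelve. all: by end_near.
Qed.
Lemma nachbin (R : realType) (X : topologicalType) (lec : X -> X -> Prop) :
  compact [set: X] -> hausdorff_space X -> preorder_rel lec ->
  closed (graph_of lec) -> forall a b, ~ lec a b ->
  exists F : X -> R, [/\ continuous F, (forall z, 0 <= F z <= 1),
    isotone lec (fun u v : R => u <= v) F, F b = 0 & F a = 1].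
Proof.
move=> cX hX pl gc a b nab.
have [lrefl ltrans] := pl.
have c1 : forall z : X, closed [set z].
  by move=> z; apply: accessible_closed_set1; exact: hausdorff_accessible.
set A0 := downset lec [set b].
set V0 := ~` upset lec [set a].
have cA0 : closed A0 by exact: downset_closed.
have oV0 : open V0 by rewrite openC; exact: upset_closed.
have lV0 : is_lower lec V0.
  by move=> x y xy nVy [u -> ux]; apply: nVy; exists a => //; exact: ltrans ux xy.
have AV : closure A0 `<=` V0.
  rewrite -(closure_id A0).1 // => z [u -> zb] [v -> az].
  by apply: nab; exact: ltrans az zb.
have ex := @interp_exists R X lec A0 V0 cX hX pl gc oV0 lV0 AV.
have [oW0 lW0 AW0 WV0] := @interpW_spec _ lec _ _ ex.
set W0 := interpW lec A0 V0 in oW0 lW0 AW0 WV0.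
have g : lev_good lec W0 V0 by move=> n; exact: (lev_inv R).
exists (levF R lec W0 V0); split.
- exact: levF_cont.
- by move=> z; exact: levF_01.
- by move=> x y; exact: levF_iso.
- apply/eqP; rewrite eq_le; apply/andP; split; last by have /andP [] := levF_01 R lec W0 V0 b.
  have hb : lev lec W0 V0 0 0 b.
    rewrite lev_0; apply: AW0; apply: subset_closure; exists b => //.
  by have := @levF_ub R X lec W0 V0 b 0 0 hb; rewrite mul0r.
- apply/eqP; rewrite eq_le; apply/andP; split; first by have /andP [] := levF_01 R lec W0 V0 a.
  apply: lb_le_inf; first exact: levD_n0.
  move=> r [[n [k [ak ->]]]|->] //.
  exfalso; have := @lev_subV X lec W0 V0 n k g a ak; apply; exists a => //.
Qed.
Lemma emb_sub (E X : topologicalType)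
  (c : E -> X) (N O : set E) (V : set X) :
  hausdorff_space X -> continuous c -> dense (range c) ->
  compact N -> O `<=` N -> open V -> c @` O = V `&` range c ->
  V `<=` c @` N.
Proof.
move=> hX cc dc cN ON oV eV w Vw.
have cl : closed (c @` N).
  apply: compact_closed => //; apply: continuous_compact => //.
  exact: continuous_subspaceT.
rewrite ((closure_id (c @` N)).1 cl) => B; rewrite nbhsE => -[B' [oB' B'w] B'B].
have [u [[Vu B'u] [y _ cy]]] : (V `&` B') `&` range c !=set0.
  apply: dc; first by exists w.
  exact: openI.
have : (c @` O) u by rewrite eV; split => //; exists y.
case=> y' Oy' cy'.
exists u; split; last exact: B'B.
by rewrite -cy'; exists y' => //; exact: ON.
Qed.
Lemma ext_C (R : realType) (E X : topologicalType) (le : E -> E -> Prop)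
  (lec : X -> X -> Prop) (c : E -> X) (g : E -> R) :
  locally_compact [set: E] ->
  hausdorff_T2_preorder_compactification le lec c -> Cfam g ->
  exists G : X -> R, continuous G /\ forall x, G (c x) = g x.
Proof.
move=> lc [[cX [prl [[cc [iso [inj [emb refl]]]] dc]]] [hX gcl]].
move=> [gc [g01 [K [cK [a ha]]]]].
pose G (z : X) : R := match pselect (exists x, c x = z) with
  | left h => g (projT1 (cid h)) | right _ => a end.
have Gc : forall x, G (c x) = g x.
  move=> x; rewrite /G; case: pselect => [h|]; last by move=> h; exfalso; apply: h; exists x.
  by case: (cid h) => x' /= /inj ->.
exists G; split => // z W; change (nbhs (G z) W -> nbhs z (G @^-1` W)).
have [[x <-]|nz] := pselect (exists x, c x = z); move=> hW.
  have [N Nx [cN _]] : compact_near (within [set: E] (nbhs x)) by exact: lc.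
  rewrite withinET in Nx.
  have gW : nbhs x (g @^-1` W).
    by move: hW; rewrite Gc => hW; exact: (gc x W hW).
  set O := (N `&` g @^-1` W)°.
  have Ox : O x by rewrite /O /interior; exact: filterI.
  have [V [oV eV]] := emb O (@open_interior _ _).
  have VN := @emb_sub _ _ c N O V hX cc dc cN (subset_trans (@interior_subset _ _) (@subIsetl _ _ _)) oV eV.
  have Vc : V (c x).
    have : (c @` O) (c x) by exists x.
    by rewrite eV => -[].
  apply: (@filterS _ _ _ V); last exact: open_nbhs_nbhs.
  move=> w Vw.
  have : (V `&` range c) w.
    by split => //; have [y _ <-] := VN _ Vw; exists y.
  rewrite -eV => -[y Oy <-] /=; rewrite Gc.
  by have [] := interior_subset Oy.
have cK' : closed (c @` K).
  apply: compact_closed => //; apply: continuous_compact => //.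
  exact: continuous_subspaceT.
have Gz : G z = a by rewrite /G; case: pselect.
apply: (@filterS _ _ _ (~` (c @` K))); last first.
  apply: open_nbhs_nbhs; split; first by rewrite openC.
  by move=> [y _ cy]; apply: nz; exists y.
move=> w nKw /=.
have -> : G w = a.
  rewrite /G; case: pselect => // h; case: (cid h) => y /= cy.
  apply: ha => Ky; apply: nKw; by exists y.
by rewrite -Gz; exact: nbhs_singleton.
Qed.
Lemma ptws_cont (X : topologicalType) (I : Type) (R : realType)
  (C : X -> {ptws I -> R}) : (forall i, continuous (fun z => C z i)) -> continuous C.
Proof.
move=> h z.
apply/cvg_sup => i.
exact: (@continuous_comp_initial _ X R (fun f : I -> R => f i) C (h i) z).
Qed.
Theorem mainTheorem12 (R : realType) (E : topologicalType) (le : E -> E -> Prop)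
  (X : topologicalType) (lec : X -> X -> Prop) (c : E -> X) :
  locally_compact [set: E] ->
  T2_preordered le ->
  tychonoff_space R E ->
  graph_of le = \bigcap_(f in Ffam (R:=R) le) Gf f ->
  hausdorff_T2_preorder_compactification le lec c ->
  dominates_HC lec c (Hfam (R:=R) le lec c) /\
  graph_of le = \bigcap_(h in Hfam (R:=R) le lec c) Gf h.
Proof.
move=> lc T2 ty hF hc.
have [[cX [prl [[cc [iso [inj [emb refl]]]] dc]]] [hX gcl]] := hc.
split.
  have ex : forall i : HCindex (Hfam (R:=R) le lec c), exists G : X -> R,
      [/\ continuous G, (forall x, G (c x) = sval i x) &
       (Hfam (R:=R) le lec c (sval i) -> isotone lec (fun u v : R => u <= v) G)].
    move=> i; have [Hi|nHi] := pselect (Hfam (R:=R) le lec c (sval i)).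
      have [_ [F [Fc [_ [Fi Fe]]]]] := Hi.
      by exists F; split.
    have Ci : Cfam (sval i) by case: (svalP i).
    have [G [Gc Ge]] := @ext_C R E X le lec c (sval i) lc hc Ci.
    by exists G; split.
  have [ext hext] := choice ex.
  pose C (z : X) : {ptws HCindex (Hfam (R:=R) le lec c) -> R} := fun i => ext i z.
  have Ccont : continuous C.
    by apply: ptws_cont => i; have [] := hext i.
  have Cc : forall x, C (c x) = @HCmap R E (Hfam (R:=R) le lec c) x.
    by move=> x; apply: funext => i; have [_ e _] := hext i; exact: e.
  exists C; split => //; split; [|split => //].
  - move=> z B hB.
    have : nbhs z (C @^-1` B) by exact: Ccont.
    rewrite nbhsE => -[B' [oB' B'z] B'B].
    have [u [B'u [x _ cxu]]] : B' `&` range c !=set0 by apply: dc => //; exists z.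
    exists (C (c x)); split; first by rewrite Cc; exists x.
    by apply: B'B; rewrite cxu.
  - move=> z w zw i Hi; have [_ _ iso'] := hext i; exact: iso' Hi z w zw.
apply/seteqP; split.
  move=> [x y] /= lxy h [[_ [isoh _]] _]; exact: isoh x y lxy.
move=> [x y] /= Hxy; apply/not_notP => nxy.
have nlc : ~ lec (c x) (c y) by move=> /refl.
have [F [Fc F01 Fi Fy Fx]] := @nachbin R X lec cX hX prl gcl (c x) (c y) nlc.
have Hh : Hfam (R:=R) le lec c (F \o c).
  split; last by exists F.
  split; last split.
  - by move=> t; apply: continuous_comp; [exact: cc|exact: Fc].
  - by move=> u v uv; apply: Fi; exact: iso.
  - by move=> t; exact: F01.
have := Hxy _ Hh; rewrite /Gf /= Fx Fy.
by rewrite ler10.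
Qed.
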